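(* \textsc{RN3DM} reduces to \textsc{IN3DM} in polynomial time.
   Context: \textsc{RN3DM}: given a multiset of positive integers $A=\{a_1,\dots,a_n\}$, sets $B=C=\{1,\dots,n\}$ and an integer $\sigma$ with $\sum_{i=1}^n(a_i+2i)=n\sigma$, decide whether there is $M\subseteq A\times B\times C$ in which every element of $A$, $B$, $C$ occurs exactly once and every triple $(a,b,c)\in M$ satisfies $a+b+c=\sigma$. \textsc{IN3DM}: given a multiset of positive integers $A=\{a_1,\dots,a_n\}$, the set $B=\{1,\dots,n\}$ and a multiset of positive integers (targets) $T=\{t_1,\dots,t_n\}$, decide whether there is $M\subseteq A\times B\times T$ in which every element of $A$, $B$, $T$ occurs exactly once and every triple $(a,b,t)\in M$ satisfies $a+b\ge t$. *)

(* Defs.v *)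
From mathcomp Require Import all_boot all_fingroup.
Set Implicit Arguments. Unset Strict Implicit. Unset Printing Implicit Defensive.

(* The two problems.  A multiset of n positive integers is a seq nat  *)
(* of size n (all entries > 0); B = C = {1,...,n}.  A matching using  *)
(* every element of A, B, C (resp. A, B, T) exactly once is given by  *)
(* bijections (permutations of the index set 'I_n) assigning to the   *)
(* i-th element of A its partners.                                    *)

Definition rn3dm_instance (A : seq nat) (sigma : nat) : Prop :=
  all (fun a => 0 < a) A /\
  \sum_(i < size A) (nth 0 A i + 2 * i.+1) = size A * sigma.

Definition rn3dm_yes (A : seq nat) (sigma : nat) : Prop :=
  exists (beta gamma : {perm 'I_(size A)}),
    forall i : 'I_(size A),
      nth 0 A i + (beta i).+1 + (gamma i).+1 = sigma.

Definition in3dm_instance (A T : seq nat) : Prop :=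
  size A = size T /\ all (fun a => 0 < a) A /\ all (fun t => 0 < t) T.

Definition in3dm_yes (A T : seq nat) : Prop :=
  exists (beta tau : {perm 'I_(size A)}),
    forall i : 'I_(size A),
      nth 0 T (tau i) <= nth 0 A i + (beta i).+1.

(* (With only + and -, unit-cost RAM time is polynomially equivalent  *)
(* to Turing machine time on the binary encoding.)                    *)

Inductive instr : Type :=
| IConst of nat & nat
| IAdd   of nat & nat & nat
| ISub   of nat & nat & nat
| ILoad  of nat & nat
| IStore of nat & nat
| IJz    of nat & nat.

Record config : Type := Config {
  pc  : nat;
  reg : nat -> nat;
  mem : nat -> nat }.

Definition upd (f : nat -> nat) (x v : nat) : nat -> nat :=
  fun y => if y == x then v else f y.

Definition halted (P : seq instr) (c : config) : bool := size P <= pc c.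

Definition step (P : seq instr) (c : config) : config :=
  let R := reg c in let M := mem c in let p := pc c in
  match nth (IConst 0 0) P p with
  | IConst d k  => Config p.+1 (upd R d k) M
  | IAdd d a b  => Config p.+1 (upd R d (R a + R b)) M
  | ISub d a b  => Config p.+1 (upd R d (R a - R b)) M
  | ILoad d a   => Config p.+1 (upd R d (M (R a))) M
  | IStore a s  => Config p.+1 R (upd M (R a) (R s))
  | IJz r l     => Config (if R r == 0 then l else p.+1) R M
  end.

Fixpoint exec (P : seq instr) (fuel : nat) (c : config) : option config :=
  if halted P c then Some c else
  match fuel with
  | 0 => None
  | k.+1 => exec P k (step P c)
  end.

Definition init_config (input : seq nat) : config :=
  Config 0 (upd (fun _ => 0) 0 (size input)) (fun j => nth 0 input j).

Definition output (c : config) : seq nat := mkseq (mem c) (reg c 0).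

Definition computes_within (P : seq instr) (input : seq nat) (t : nat)
    (out : seq nat) : Prop :=
  exists c, exec P t (init_config input) = Some c /\ output c = out.

Definition bitlen (x : nat) : nat := (trunc_log 2 x).+1.
Definition enc_size (s : seq nat) : nat := \sum_(x <- s) bitlen x.

(* Main.v *)
Require Import Defs.
From mathcomp Require Import all_boot all_fingroup.
From mathcomp Require Import zify.
Set Implicit Arguments. Unset Strict Implicit. Unset Printing Implicit Defensive.

Definition Prg : seq instr :=
  [:: IConst 1 1; IConst 2 0; ILoad 3 2; ISub 4 0 1; IConst 5 0;
      ISub 6 4 5; IJz 6 12; IAdd 7 5 1; ILoad 8 7; IStore 5 8; IAdd 5 5 1; IJz 2 5;
      IConst 5 0;
      ISub 6 4 5; IJz 6 21; IAdd 7 4 5; IAdd 9 5 1; ISub 8 3 9; IStore 7 8; IAdd 5 5 1; IJz 2 13;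
      IAdd 0 4 4].

Lemma exec_S f c : pc c < 22 ->
  exec Prg f.+1 c = exec Prg f (step Prg c).
Proof. by move=> h; rewrite /= /halted /= leqNgt h. Qed.


Lemma exec_halt f c : 22 <= pc c -> exec Prg f c = Some c.
Proof. by case: f => [|f] h; rewrite /= /halted /= h. Qed.

Arguments exec : simpl never.
Section Loops.
Variables (A : seq nat) (sigma : nat).
Let n := size A.
Let T := mkseq (fun k => sigma - k.+1) n.

Ltac stp := match goal with |- context [exec Prg (S ?k) ?c] =>
  rewrite (@exec_S k c); [rewrite /step /upd; simpl | by []] end.

Lemma loop1 m : forall i R M f, i + m = n -> R 1 = 1 -> R 2 = 0 -> R 3 = sigma ->
  R 4 = n -> R 5 = i ->
  (forall j, M j = if j < i then nth 0 A j else nth 0 (sigma :: A) j) ->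
  exists R' M', [/\ R' 1 = 1, R' 2 = 0, R' 3 = sigma, R' 4 = n &
   (forall j, j < n -> M' j = nth 0 (A ++ T) j)] /\
   exec Prg (7 * m + 2 + f) (Config 5 R M) = exec Prg f (Config 12 R' M').
Proof.
elim: m => [|m IH] i R M f him H1 H2 H3 H4 H5 HM.
  rewrite muln0 add0n addnC !addnS addn0.
  do 2 eexists; split; last first.
    stp. rewrite H4 H5. have -> : n - i = 0 by lia.
    stp. reflexivity.
  split => //=.
  move=> j hj; rewrite HM nth_cat -/n hj; have -> : j < i by lia. done.
have -> : 7 * m.+1 + 2 + f = (7 * m + 2 + f).+4.+3 by lia.
suff [R1 [M1 [[G1 G2 G3 [G4 G5] GM] ->]]] : exists R1 M1,
  [/\ R1 1 = 1, R1 2 = 0, R1 3 = sigma, R1 4 = n /\ R1 5 = i.+1 &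
   (forall j, M1 j = if j < i.+1 then nth 0 A j else nth 0 (sigma :: A) j)] /\
  exec Prg (7 * m + 2 + f).+4.+3 (Config 5 R M) = exec Prg (7 * m + 2 + f) (Config 5 R1 M1).
  by apply: (IH i.+1) => //; lia.
do 2 eexists; split; last first.
stp. rewrite H4 H5. stp.
have -> : (n - i == 0) = false by lia.
stp. stp. stp. stp. stp.
  rewrite H2 H5 H1 addn1. reflexivity.
rewrite /= H1 H2 H3 H4; split => //.
move=> j; rewrite ltnS; case: eqP => [->|/eqP ne].
  rewrite leqnn HM; have -> : (i.+1 < i) = false by lia. done.
by rewrite HM; case: ifP; case: ifP => //; lia.
Qed.
Lemma loop2 m : forall k R M f, k + m = n ->
  [/\ R 1 = 1, R 2 = 0, R 3 = sigma, R 4 = n /\ R 5 = k &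
   (forall j, j < n + k -> M j = nth 0 (A ++ T) j)] ->
  exists R' M', [/\ R' 4 = n,
   (forall j, j < n + n -> M' j = nth 0 (A ++ T) j) &
   exec Prg (8 * m + 2 + f) (Config 13 R M) = exec Prg f (Config 21 R' M')].
Proof.
elim: m => [|m IH] k R M f him [H1 H2 H3 [H4 H5] HM].
  rewrite muln0 add0n addnC !addnS addn0.
  stp. rewrite H4 H5. have -> : n - k = 0 by lia.
  stp. do 2 eexists; split; last reflexivity.
    done.
  by move=> j hj; apply: HM; lia.
have -> : 8 * m.+1 + 2 + f = (8 * m + 2 + f).+4.+4 by lia.
suff [R1 [M1 [HH ->]]] : exists R1 M1,
  [/\ R1 1 = 1, R1 2 = 0, R1 3 = sigma, R1 4 = n /\ R1 5 = k.+1 &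
   (forall j, j < n + k.+1 -> M1 j = nth 0 (A ++ T) j)] /\
  exec Prg (8 * m + 2 + f).+4.+4 (Config 13 R M) = exec Prg (8 * m + 2 + f) (Config 13 R1 M1).
  by apply: (IH k.+1) => //; lia.
do 2 eexists; split; last first.
  stp. rewrite H4 H5. stp.
  have -> : (n - k == 0) = false by lia.
  stp. stp. stp. stp. stp. stp.
  rewrite H1 H2 H3 H4 H5 addn1 /=. reflexivity.
rewrite /= H1 H2 H3 H4; split => //.
move=> j hj; case: eqP => [->|ne].
  rewrite nth_cat -/n ltnNge leq_addr /= addKn /T nth_mkseq //; lia.
by apply: HM; lia.
Qed.

Lemma run : exists c, exec Prg (15 * n + 11) (init_config (sigma :: A)) = Some c
  /\ output c = A ++ T.
Proof.
have -> : 15 * n + 11 = (7 * n + 2 + (8 * n + 2 + 1).+1).+4.+1 by lia.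
rewrite /init_config.
stp. stp. stp. stp. stp.
match goal with |- context [exec Prg _ (Config 5 ?R ?M)] =>
  generalize (loop1 (i := 0) (m := n) (R := R) (M := M) (8 * n + 2 + 1).+1 erefl erefl erefl erefl ltac:(by rewrite /= subn1) erefl (fun j => erefl))
end.
move=> [R1 [M1 [[G1 G2 G3 G4 GM] ->]]].
stp.
have [R2 [M2 [G24 GM2 ->]]] := loop2 (k := 0) (m := n) (R := upd R1 5 0) (M := M1) 1 erefl
  (And5 G1 G2 G3 (conj G4 erefl) (fun j (hj : j < n + 0) => GM j ltac:(by rewrite addn0 in hj))).
stp. rewrite exec_halt //.
eexists; split; first reflexivity.
rewrite /output /= G24.
apply: (@eq_from_nth _ 0); rewrite size_mkseq ?size_cat /T ?size_mkseq -/n //.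
move=> j hj; rewrite nth_mkseq //; apply: GM2; lia.
Qed.
End Loops.

Lemma enc_ge s : size s <= enc_size s.
Proof. rewrite /enc_size -sum1_size; exact: leq_sum. Qed.

Lemma sum_ge_eq n (F G : 'I_n -> nat) : (forall i, G i <= F i) ->
  \sum_i F i = \sum_i G i -> forall i, F i = G i.
Proof.
move=> le eq i.
have : \sum_j (F j - G j) == 0 by rewrite sumnB // eq subnn.
rewrite sum_nat_eq0 => /forallP /(_ i) /= /eqP.
have := le i; lia.
Qed.

Lemma sum_double n : \sum_(i < n) (2 * i.+1) = n * n.+1.
Proof. elim: n => [|n IH]; first by rewrite big_ord0. rewrite big_ord_recr /= IH. lia. Qed.

Lemma sum_perm n (s : {perm 'I_n}) : \sum_i (s i).+1 = \sum_(i < n) i.+1.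
Proof. symmetry; exact: (reindex_inj (@perm_inj _ s)). Qed.

Theorem theorem6 :
  exists (P : seq instr) (c d : nat),
    forall (A : seq nat) (sigma : nat),
      rn3dm_instance A sigma ->
      exists (A' T' : seq nat) (t : nat),
        [/\ t <= c * (enc_size (sigma :: A)).+1 ^ d,
            computes_within P (sigma :: A) t (A' ++ T'),
            in3dm_instance A' T' &
            (rn3dm_yes A sigma <-> in3dm_yes A' T')].
Proof.
exists Prg, 20, 1 => A sigma [Hpos Hsum].
set n := size A.
set T := mkseq (fun k => sigma - k.+1) n.
have Hsa : n <= \sum_(i < n) nth 0 A i.
  rewrite -[X in X <= _]card_ord -sum1_card; apply: leq_sum => i _.
  by move/all_nthP: Hpos => /(_ 0 i (ltn_ord i)).
have Hsum2 : \sum_(i < n) nth 0 A i + n * n.+1 = n * sigma.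
  by rewrite -sum_double -big_split.
have Hsig : 0 < n -> n < sigma.
  move=> n0; have : n * n.+2 <= n * sigma by lia.
  by rewrite leq_pmul2l // => h; lia.
exists A, T, (15 * n + 11); split.
- rewrite expn1; have := enc_ge (sigma :: A); rewrite /= -/n; lia.
- have [c [E O]] := run A sigma. by exists c.
- split; first by rewrite /T size_mkseq.
  split => //. rewrite /T /mkseq all_map; apply/allP => k; rewrite mem_iota /= => hk.
  have := Hsig ltac:(lia). lia.
- split.
  + move=> [beta [gamma H]]; exists beta, gamma => i.
    rewrite /T nth_mkseq //; have := H i; lia.
  + move=> [beta [tau H]]; exists beta, tau => i.
    have := @sum_ge_eq n (fun i => nth 0 A i + (beta i).+1 + (tau i).+1) (fun _ => sigma).
    move=> /(_ _ _ i) -> //.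
      move=> j; have := H j; rewrite /T nth_mkseq //. rewrite /n in j *. lia.
    rewrite !big_split /= !sum_perm sum_nat_const card_ord.
    rewrite -addnA addnn -mul2n big_distrr sum_double; exact: Hsum2.
Qed.
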